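(* Let $\mathfrak{H}$ be a complete Heyting algebra and $\mathsf{i}\in\mathfrak{H}$. Then $$\bigwedge_{\mathsf{j}\in\mathfrak{H}}(\mathsf{j}\vee(\mathsf{j}\to\mathsf{i})) = \bigwedge\{\mathsf{h}\in\mathfrak{H}\mid \mathsf{h}\ge\mathsf{i}\text{ and }\mathsf{h}\text{ is }\mathsf{i}\text{-dense}\}.$$
   Context: For elements $\mathsf{h}\ge\mathsf{i}$ of a Heyting algebra, $\mathsf{h}$ is called $\mathsf{i}$-dense if for every $\mathsf{j}$ in the algebra, $\mathsf{h}\wedge\mathsf{j}=\mathsf{i}$ implies $\mathsf{j}=\mathsf{i}$. *)

(* Defs.v *)
From HB Require Import structures.
From mathcomp Require Import all_boot all_order.
Set Implicit Arguments. Unset Strict Implicit. Unset Printing Implicit Defensive.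
Import Order.Theory.
Local Open Scope order_scope.

(* A complete Heyting algebra: a lattice T (MathComp order.v) together with
   arbitrary meets (infima of arbitrary subsets, given as predicates T -> Prop),
   which makes it a complete lattice, and a Heyting implication right adjoint
   to binary meet. *)
Record completeHeyting (d : Order.disp_t) (T : latticeType d) := CompleteHeyting {
  chInf : (T -> Prop) -> T;
  chInf_lb : forall (S : T -> Prop) x, S x -> chInf S <= x;
  chInf_glb : forall (S : T -> Prop) y, (forall x, S x -> y <= x) -> y <= chInf S;
  chImpl : T -> T -> T;
  chImplP : forall x y z, (x `&` y <= z) = (x <= chImpl y z)
}.

Definition idense d (T : latticeType d) (i h : T) : Prop :=
  forall j : T, h `&` j = i -> j = i.

(* Main.v *)
Require Import Defs.
From HB Require Import structures.
From mathcomp Require Import all_boot all_order.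
Import Order.Theory.
Local Open Scope order_scope.

Theorem corollary4p5 (d : Order.disp_t) (T : latticeType d)
    (H : completeHeyting T) (i : T) :
  chInf H (fun x => exists j : T, x = j `|` chImpl H j i)
  = chInf H (fun h => i <= h /\ idense i h).
Proof.
have iimp : forall j, i <= chImpl H j i.
  by move=> j; rewrite -(chImplP H) leIl.
apply/le_anti/andP; split.
- apply: chInf_glb => h [ih dh].
  have hi : chImpl H h i = i.
    apply: dh; apply/le_anti/andP; split.
      by rewrite meetC (chImplP H).
    by rewrite lexI ih iimp.
  have L := @chInf_lb _ _ H (fun x => exists j : T, x = j `|` chImpl H j i) (h `|` chImpl H h i).
  apply: le_trans (L _) _; first by exists h.
  by rewrite hi leUx lexx ih.
- apply: chInf_glb => x [j ->]; apply: chInf_lb; split.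
    by apply: le_trans (iimp j) _; rewrite leUr.
  move=> k E; apply/le_anti/andP; split; last by rewrite -E leIr.
  have kj : k <= chImpl H j i.
    rewrite -(chImplP H) -E lexI leIl andbT.
    by apply: le_trans (leIr j k) _; rewrite leUl.
  rewrite -E lexI lexx andbT.
  by apply: le_trans kj _; rewrite leUr.
Qed.
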